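(* Let $S$ be an additive numerical semigroup with multiplicity $e$ whose blowup $B$ equals $\mathbb N$ (equivalently, $a_1-e=1$). Then ${\rm d}_{\max}(S)=d(e-1;B^{\mathcal D})$.
   Context: $S$ is a numerical semigroup (a submonoid of $\mathbb N$ with finite complement) with minimal generators $e<a_1<\dots<a_t$. An $S$-factorization of $n$ is $(c_0,\dots,c_t)\in\mathbb N^{t+1}$ with $c_0e+\sum c_ia_i=n$, of length $\sum c_i$. ${\rm ord}(n;S)$ is the maximal such length, ${\rm d}_{\max}(n;S)$ is the number of factorizations of maximal length, and ${\rm d}_{\max}(S)=\max_{n\in S}{\rm d}_{\max}(n;S)$. $S$ is additive if ${\rm ord}(u+e;S)={\rm ord}(u;S)+1$ for all $u\in S$. The blowup is $B=\langle e,d_1,\dots,d_t\rangle$ with $d_i=a_i-e$, and $\mathcal D=(e,d_1,\dots,d_t)$. $d(b;B^{\mathcal D})$ is the number of tuples $(x_0,\dots,x_t)\in\mathbb N^{t+1}$ with $x_0e+\sum x_id_i=b$. *)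

(* Defs.v *)
From mathcomp Require Import all_boot.
Set Implicit Arguments. Unset Strict Implicit. Unset Printing Implicit Defensive.

(* A numerical semigroup is given by its list of minimal generators
   s = [:: e; a_1; ...; a_t] (strictly increasing). Entry i of s is nth 0 s i. *)

Definition in_monoid (s : seq nat) (n : nat) : Prop :=
  exists c : 'I_(size s) -> nat, \sum_(i < size s) c i * nth 0 s i = n.

(* All tuples (c_0,...,c_t) with sum c_i s_i = n.  When every entry of s is
   positive, each c_i <= n, so coefficients in 'I_n.+1 capture all of them. *)
Definition factorizations (s : seq nat) (n : nat)
  : {set {ffun 'I_(size s) -> 'I_n.+1}} :=
  [set c : {ffun 'I_(size s) -> 'I_n.+1} | \sum_(i < size s) (c i : nat) * nth 0 s i == n].

Definition flen (k m : nat) (c : {ffun 'I_k -> 'I_m}) : nat :=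
  \sum_(i < k) (c i : nat).

Definition ord_len (s : seq nat) (n : nat) : nat :=
  \max_(c in factorizations s n) flen c.

Definition dmax_n (s : seq nat) (n : nat) : nat :=
  #|[set c in factorizations s n | flen c == ord_len s n]|.

Definition numsg_mingens (s : seq nat) : Prop :=
  [/\ sorted ltn s, 0 \notin s,
      (exists F, forall n, F <= n -> in_monoid s n) &
      forall a, a \in s -> ~ in_monoid (filter (predC1 a) s) a].

Definition multiplicity (s : seq nat) : nat := head 0 s.

Definition additive (s : seq nat) : Prop :=
  forall u, in_monoid s u -> ord_len s (u + multiplicity s) = (ord_len s u).+1.

(* the tuple D = (e, d_1, ..., d_t), d_i = a_i - e; B is the monoid it generates *)
Definition blowup_gens (s : seq nat) : seq nat :=
  multiplicity s :: [seq a - multiplicity s | a <- behead s].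

Definition d_count (D : seq nat) (b : nat) : nat := #|factorizations D b|.

(* Main.v *)
Require Import Defs.
From mathcomp Require Import all_boot zify.
Set Implicit Arguments. Unset Strict Implicit.

Lemma term_le_sum k (F : nat -> nat) j : j < k -> F j <= \sum_(0 <= i < k) F i.
Proof. move=> H; rewrite big_mkord (bigD1 (Ordinal H)) //=; exact: leq_addr. Qed.

Lemma sum_pos_ex k (F : nat -> nat) : 0 < \sum_(0 <= i < k) F i -> exists2 i, i < k & 0 < F i.
Proof.
elim: k => [|k IH]; first by rewrite big_geq.
rewrite big_nat_recr //= addn_gt0 => /orP [/IH [i Hi Fi]|Fk].
  by exists i => //; apply: ltnW.
by exists k.
Qed.

Lemma sum_ind1 k j (F : nat -> nat) :
  \sum_(0 <= i < k) (if i == j then F i else 0) = if j < k then F j else 0.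
Proof.
elim: k => [|k IH]; first by rewrite big_geq.
rewrite big_nat_recr //= IH ltnS.
case: (ltngtP j k) => H.
- by rewrite addn0.
- by [].
- by rewrite add0n H.
Qed.

Lemma in_monoidE x l n : in_monoid (x :: l) n <->
  exists cn : nat -> nat, \sum_(0 <= i < (size l).+1) cn i * nth 0 (x :: l) i = n.
Proof.
split.
  move=> [c Hc]; exists (fun i => c (inord i)); rewrite big_mkord -Hc.
  by apply: eq_bigr => i _; rewrite inord_val.
move=> [cn Hc]; exists (fun i => cn i); by rewrite -Hc big_mkord.
Qed.

Definition cnat k m (c : {ffun 'I_k.+1 -> 'I_m}) (i : nat) : nat := c (inord i).

Lemma sum_cnat k m (c : {ffun 'I_k.+1 -> 'I_m}) (G : nat -> nat -> nat) :
  \sum_(i < k.+1) G (c i) i = \sum_(0 <= i < k.+1) G (cnat c i) i.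
Proof. by rewrite big_mkord; apply: eq_bigr => i _; rewrite /cnat inord_val. Qed.

Lemma ffun_eq_cnat k m (c1 c2 : {ffun 'I_k.+1 -> 'I_m}) :
  (forall i, i < k.+1 -> cnat c1 i = cnat c2 i) -> c1 = c2.
Proof.
move=> H; apply/ffunP => i; apply: val_inj.
by have := H i (ltn_ord i); rewrite /cnat inord_val.
Qed.

Definition mkf k n (cn : nat -> nat) : {ffun 'I_k.+1 -> 'I_n.+1} :=
  [ffun i : 'I_k.+1 => inord (cn (val i))].

Lemma cnat_mkf k n cn i : i < k.+1 -> cn i <= n -> cnat (@mkf k n cn) i = cn i.
Proof.
move=> Hi Hn; rewrite /cnat ffunE.
have -> : \val (inord i : 'I_k.+1) = i by exact: inordK.
by rewrite inordK.
Qed.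

Lemma in_fact e A n (c : {ffun 'I_(size A).+1 -> 'I_n.+1}) :
  (c \in factorizations (e :: A) n) =
  (\sum_(0 <= i < (size A).+1) cnat c i * nth 0 (e :: A) i == n).
Proof. by rewrite inE (sum_cnat c (fun x i => x * nth 0 (e :: A) i)). Qed.

Lemma flenE k m (c : {ffun 'I_k.+1 -> 'I_m}) : flen c = \sum_(0 <= i < k.+1) cnat c i.
Proof. by rewrite /flen (sum_cnat c (fun x _ => x)). Qed.

Lemma cn_bound e A n (cn : nat -> nat) i :
  (forall i, i < (size A).+1 -> 0 < nth 0 (e :: A) i) ->
  \sum_(0 <= i < (size A).+1) cn i * nth 0 (e :: A) i = n ->
  i < (size A).+1 -> cn i <= n.
Proof.
move=> Hp Hs Hi; rewrite -Hs.
apply: leq_trans (term_le_sum (fun i => cn i * nth 0 (e :: A) i) Hi).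
by rewrite leq_pmulr // Hp.
Qed.

Lemma ord_ub e A n (cn : nat -> nat) :
  (forall i, i < (size A).+1 -> 0 < nth 0 (e :: A) i) ->
  \sum_(0 <= i < (size A).+1) cn i * nth 0 (e :: A) i = n ->
  \sum_(0 <= i < (size A).+1) cn i <= ord_len (e :: A) n.
Proof.
move=> Hp Hs.
have Hc : forall i, i < (size A).+1 -> cnat (@mkf (size A) n cn) i = cn i.
  by move=> i Hi; rewrite cnat_mkf // (cn_bound Hp Hs Hi).
have Hin : mkf (size A) n cn \in factorizations (e :: A) n.
  rewrite in_fact; apply/eqP; apply: etrans Hs; apply/eq_big_nat => i /andP [_ Hi]; by rewrite Hc.
have := @leq_bigmax_cond _ (mem (factorizations (e :: A) n)) (fun c => flen c) _ Hin.
rewrite /ord_len flenE (eq_big_nat _ _ (fun i Hi => Hc i (proj2 (andP Hi)))) //.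
Qed.

Lemma ord_att e A n :
  (forall i, i < (size A).+1 -> 0 < nth 0 (e :: A) i) ->
  in_monoid (e :: A) n ->
  exists cn : nat -> nat,
    \sum_(0 <= i < (size A).+1) cn i * nth 0 (e :: A) i = n /\
    \sum_(0 <= i < (size A).+1) cn i = ord_len (e :: A) n.
Proof.
move=> Hp /in_monoidE [cn Hs].
have Hc : forall i, i < (size A).+1 -> cnat (@mkf (size A) n cn) i = cn i.
  by move=> i Hi; rewrite cnat_mkf // (cn_bound Hp Hs Hi).
have Hin : mkf (size A) n cn \in factorizations (e :: A) n.
  rewrite in_fact; apply/eqP; apply: etrans Hs; apply/eq_big_nat => i /andP [_ Hi]; by rewrite Hc.
have Hpos : 0 < #|factorizations (e :: A) n| by apply/card_gt0P; exists (mkf (size A) n cn).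
have [c0 Hc0 Hmax] := @eq_bigmax_cond _ _ (fun c => flen c) Hpos.
exists (cnat c0); split.
  by apply/eqP; rewrite -in_fact.
by rewrite /ord_len Hmax flenE.
Qed.

Lemma in_fact' x l n k0 (c : {ffun 'I_(size l).+1 -> 'I_n.+1}) : (size l).+1 = k0 ->
  (c \in factorizations (x :: l) n) = (\sum_(0 <= i < k0) cnat c i * nth 0 (x :: l) i == n).
Proof. by move=> <-; apply: in_fact. Qed.

Lemma leq_sum_nat m k (F G : nat -> nat) : (forall i, m <= i < k -> F i <= G i) ->
  \sum_(m <= i < k) F i <= \sum_(m <= i < k) G i.
Proof.
move=> H; rewrite big_nat_cond [X in _ <= X]big_nat_cond.
by apply: leq_sum => i /andP [Hi _]; apply: H.
Qed.

Theorem proposition4p13 (s : seq nat) :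
  numsg_mingens s -> additive s ->
  (forall n, in_monoid (blowup_gens s) n) ->
  (exists2 n, in_monoid s n &
     dmax_n s n = d_count (blowup_gens s) (multiplicity s).-1) /\
  (forall n, in_monoid s n ->
     dmax_n s n <= d_count (blowup_gens s) (multiplicity s).-1).
Proof.
move=> [Hsort H0 [F HF] _] Hadd HB.
case: s Hsort H0 HF Hadd HB => [|e A] Hsort H0 HF Hadd HB.
  by have [c] := HF F.+1 (leqnSn F); rewrite big_ord0.
rewrite /multiplicity /= in Hadd *.
have Hbl : blowup_gens (e :: A) = e :: [seq a - e | a <- A] by [].
rewrite Hbl in HB *.
set k := (size A).+1.
set w := nth 0 (e :: A).
have He : 0 < e by rewrite lt0n; apply: contra H0 => /eqP <-; rewrite inE eqxx.
have HallA : all (ltn e) A := order_path_min ltn_trans Hsort.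
have Hgt : forall i, 0 < i < k -> e < w i.
  move=> [|i] // Hi; rewrite /w /=.
  by apply: (allP HallA); apply: mem_nth; case/andP: Hi.
have Hge : forall i, i < k -> e <= w i.
  by move=> [|i] Hi; [rewrite /w | apply: ltnW; apply: Hgt].
have Hp : forall i, i < (size A).+1 -> 0 < nth 0 (e :: A) i.
  by move=> i Hi; apply: leq_trans He (Hge i Hi).
have Hsz : (size [seq a - e | a <- A]).+1 = k by rewrite size_map.
set D := e :: [seq a - e | a <- A].
have Hdd : forall i, i < k -> nth 0 D i = if i == 0 then e else w i - e.
  move=> [|i] Hi //=; rewrite (nth_map 0) //.
have Hddp : forall i, i < k -> 0 < nth 0 D i.
  move=> i Hi; rewrite Hdd //; case: eqP => [_|/eqP Hi0] //.
  rewrite subn_gt0; apply: Hgt; rewrite Hi andbT lt0n //.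
have [j Hj Hdj] : exists2 j, j < k & nth 0 D j = 1.
  have /in_monoidE [cn Hcn] := HB 1.
  rewrite Hsz in Hcn.
  have [j Hj Hpos] := @sum_pos_ex k (fun i => cn i * nth 0 D i) ltac:(by rewrite Hcn).
  exists j => //.
  have := term_le_sum (fun i => cn i * nth 0 D i) Hj; rewrite Hcn.
  move=> Hle; have : cn j * nth 0 D j == 1 by rewrite eqn_leq Hle Hpos.
  by rewrite muln_eq1 => /andP [_ /eqP].
have Hdec : forall cn : nat -> nat, \sum_(0 <= i < k) cn i * w i =
    e * \sum_(0 <= i < k) cn i + \sum_(0 <= i < k) cn i * (w i - e).
  move=> cn; rewrite big_distrr -big_split /=; apply: eq_big_nat => i /andP [_ Hi].
  by rewrite mulnBr (mulnC e) subnKC // leq_mul2l Hge ?orbT.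
have Hmon_e : forall n, in_monoid (e :: A) n -> in_monoid (e :: A) (n + e).
  move=> n /in_monoidE [cn Hcn]; apply/in_monoidE; exists (fun i => cn i + (i == 0)).
  rewrite -Hcn.
  have -> : \sum_(0 <= i < k) (cn i + (i == 0)) * w i =
     \sum_(0 <= i < k) cn i * w i + \sum_(0 <= i < k) (if i == 0 then w i else 0).
    rewrite -big_split; apply: eq_big_nat => i _; case: eqP => _ /=; lia.
  by rewrite sum_ind1.
have Hiter : forall n, in_monoid (e :: A) n -> forall m,
    in_monoid (e :: A) (n + m * e) /\ ord_len (e :: A) (n + m * e) = ord_len (e :: A) n + m.
  move=> n Hn; elim => [|m [IHm IHo]]; first by rewrite mul0n !addn0.
  have -> : n + m.+1 * e = (n + m * e) + e by rewrite mulSn; lia.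
  split; first exact: Hmon_e.
  by rewrite Hadd // IHo addnS.
have Hab : forall a b, (\sum_(0 <= i < k) ((if i == 0 then a else 0) + (if i == j then b else 0)) * w i
     = a * e + b * w j) /\ (\sum_(0 <= i < k) ((if i == 0 then a else 0) + (if i == j then b else 0)) = a + b).
  move=> a b; split.
    have -> : \sum_(0 <= i < k) ((if i == 0 then a else 0) + (if i == j then b else 0)) * w i
      = \sum_(0 <= i < k) ((if i == 0 then a * w i else 0) + (if i == j then b * w i else 0)).
      by apply: eq_big_nat => i _; rewrite mulnDl; case: (i == 0); case: (i == j).
    by rewrite big_split /= !sum_ind1 Hj.
  rewrite big_split /= (sum_ind1 k 0 (fun _ => a)) (sum_ind1 k j (fun _ => b)) Hj //.
have Hord : forall n, in_monoid (e :: A) n ->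
    [/\ e * ord_len (e :: A) n <= n, n - e * ord_len (e :: A) n < e &
     forall cn : nat -> nat, \sum_(0 <= i < k) cn i * w i = n ->
       \sum_(0 <= i < k) cn i = ord_len (e :: A) n ->
       \sum_(0 <= i < k) cn i * (w i - e) = n - e * ord_len (e :: A) n].
  move=> n Hn; have [cn [Hs Hl]] := ord_att Hp Hn.
  have HR := Hdec cn; rewrite Hs Hl in HR.
  set L := ord_len (e :: A) n in HR Hl *.
  set R := \sum_(0 <= i < k) cn i * (w i - e) in HR.
  have Hpart : forall cn' : nat -> nat, \sum_(0 <= i < k) cn' i * w i = n ->
       \sum_(0 <= i < k) cn' i = L -> \sum_(0 <= i < k) cn' i * (w i - e) = n - e * L.
    by move=> cn' Hs' Hl'; have := Hdec cn'; rewrite Hs' Hl'; lia.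
  split => //; first by lia.
  rewrite HR addKn ltnNge; apply/negP => HeR.
  have [Hm Hom] := Hiter n Hn R.
  have [Hj0|Hj0] := eqVneq j 0.
    have He1 : e = 1 by move: Hdj; rewrite Hj0.
    have [H1 H2] := Hab 0 (n + R * e).
    have Heq : 0 * e + (n + R * e) * w j = n + R * e by rewrite Hj0 /w /= He1; lia.
    have := ord_ub Hp (etrans H1 Heq).
    rewrite -/k H2 Hom -/L.
    rewrite He1 in HR HeR *; lia.
  have Hwj : w j = e + 1.
    have := Hgt j; move: Hdj; rewrite Hdd // (negbTE Hj0) => Hd.
    rewrite Hj lt0n Hj0 /= => /(_ isT); lia.
  have [H1 H2] := Hab (L + 1 + e) (R - e).
  have Heq : (L + 1 + e) * e + (R - e) * w j = n + R * e.
    rewrite Hwj HR; move: HeR; nia.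
  have := ord_ub Hp (etrans H1 Heq).
  rewrite -/k H2 Hom -/L; lia.
have Hup : forall n, in_monoid (e :: A) n -> dmax_n (e :: A) n <= d_count D e.-1.
  move=> n Hn; have [HL HR Hpart] := Hord n Hn.
  rewrite /dmax_n /d_count.
  set L := ord_len (e :: A) n in HL HR Hpart *.
  set R := n - e * L in HR Hpart.
  set MS := [set c in factorizations (e :: A) n | flen c == L].
  pose xv (c : {ffun 'I_(size A).+1 -> 'I_n.+1}) i :=
    (if i == 0 then 0 else cnat c i) + (if i == j then e.-1 - R else 0).
  pose f c := mkf (size [seq a - e | a <- A]) e.-1 (xv c).
  have Hmax : forall c, c \in MS ->
      \sum_(0 <= i < k) cnat c i * w i = n /\ \sum_(0 <= i < k) cnat c i = L.
    move=> c; rewrite inE in_fact flenE => /andP [/eqP H1 /eqP H2]; by split.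
  have Hxsum : forall c, c \in MS -> \sum_(0 <= i < k) xv c i * nth 0 D i = e.-1.
    move=> c Hc; have [H1 H2] := Hmax c Hc.
    have -> : \sum_(0 <= i < k) xv c i * nth 0 D i =
        \sum_(0 <= i < k) (cnat c i * (w i - e) + (if i == j then (fun _ => e.-1 - R) i else 0)).
      apply: eq_big_nat => i /andP [_ Hi]; rewrite /xv mulnDl.
      congr (_ + _).
        rewrite Hdd //; case: eqP => [->|_] //; by rewrite /w /= subnn muln0.
      by case: eqP => [->|_] //; rewrite Hdj muln1.
    rewrite big_split /= Hpart // sum_ind1 Hj; lia.
  have Hxb : forall c, c \in MS -> forall i, i < k -> xv c i <= e.-1.
    move=> c Hc i Hi; rewrite -(Hxsum c Hc).
    apply: leq_trans (term_le_sum (fun i => xv c i * nth 0 D i) Hi).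
    by rewrite leq_pmulr // Hddp.
  have Hcf : forall c, c \in MS -> forall i, i < k -> cnat (f c) i = xv c i.
    by move=> c Hc i Hi; rewrite cnat_mkf ?Hsz // Hxb.
  have Hin : forall c, c \in MS -> f c \in factorizations D e.-1.
    move=> c Hc; rewrite (in_fact' _ _ Hsz); apply/eqP; apply: etrans (Hxsum c Hc).
    by apply: eq_big_nat => i /andP [_ Hi]; rewrite Hcf.
  have Hinj : {in MS &, injective f}.
    move=> c1 c2 H1 H2 Hfe; apply: ffun_eq_cnat => i Hi.
    have Hne : forall i, 0 < i < k -> cnat c1 i = cnat c2 i.
      move=> i' /andP [Hi0 Hi'].
      have := Hcf c1 H1 i' Hi'; rewrite Hfe Hcf // /xv.
      rewrite (negbTE (lt0n_neq0 Hi0)) /= => /eqP; rewrite eqn_add2r => /eqP //.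
    case: (posnP i) => [->|Hi0]; last by apply: Hne; rewrite Hi0.
    have [_ E1] := Hmax c1 H1; have [_ E2] := Hmax c2 H2.
    rewrite big_ltn // in E1; rewrite big_ltn // in E2.
    have Et : \sum_(1 <= i < k) cnat c1 i = \sum_(1 <= i < k) cnat c2 i.
      by apply: eq_big_nat => i' Hi'; apply: Hne.
    by apply/eqP; rewrite -(eqn_add2r (\sum_(1 <= i < k) cnat c2 i)) -{1}Et E1 E2.
  rewrite -(card_in_imset Hinj); apply: subset_leq_card; apply/subsetP => y /imsetP [c Hc ->].
  exact: Hin.
have Hwj : j != 0 -> w j = e + 1.
  move=> Hj0; have := Hgt j; move: Hdj; rewrite Hdd // (negbTE Hj0) => Hd.
  rewrite Hj lt0n Hj0 /= => /(_ isT); lia.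
pose n0 := e.-1 * w j.
have Hn0 : in_monoid (e :: A) n0.
  apply/in_monoidE; exists (fun i => if i == j then e.-1 else 0).
  rewrite -/k (eq_big_nat _ _ (F2 := fun i => if i == j then e.-1 * w i else 0)).
    by rewrite sum_ind1 Hj.
  by move=> i _; case: eqP.
have [HL0 HR0 Hpart0] := Hord n0 Hn0.
set L0 := ord_len (e :: A) n0 in HL0 HR0 Hpart0 *.
have [HR0e HL0e] : n0 - e * L0 = e.-1 /\ e.-1 <= L0.
  have [Hj0|Hj0] := eqVneq j 0.
    have He1 : e = 1 by move: Hdj; rewrite Hj0.
    move: HR0; rewrite /n0 He1 /=; lia.
  have Hn : n0 = e * e.-1 + e.-1 by rewrite /n0 (Hwj Hj0) mulnDr muln1 mulnC.
  rewrite Hn in HL0 HR0 *.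
  case: (ltngtP L0 e.-1) => H.
  - have : e * L0.+1 <= e * e.-1 by rewrite leq_mul2l H orbT.
    rewrite mulnS; lia.
  - have : e * e <= e * L0 by rewrite leq_mul2l; apply/orP; right; lia.
    have Hee : e * e = e * e.-1 + e by case: (e) He => //= p _; rewrite mulnS addnC.
    lia.
  - rewrite H; lia.
have Hlow : d_count D e.-1 <= dmax_n (e :: A) n0.
  rewrite /dmax_n /d_count -/L0.
  set MS := [set c in factorizations (e :: A) n0 | flen c == L0].
  pose T (x : {ffun 'I_(size [seq a - e | a <- A]).+1 -> 'I_e.-1.+1}) :=
    \sum_(1 <= i < k) cnat x i.
  pose yv x i := if i == 0 then L0 - T x else cnat x i.
  pose g x := mkf (size A) n0 (yv x).
  have Hx : forall x, x \in factorizations D e.-1 ->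
      cnat x 0 = 0 /\ \sum_(1 <= i < k) cnat x i * (w i - e) = e.-1.
    move=> x; rewrite (in_fact' _ _ Hsz) big_ltn // => /eqP.
    rewrite (eq_big_nat _ _ (F2 := fun i => cnat x i * (w i - e))); last first.
      by move=> i /andP [Hi1 Hi]; rewrite Hdd // (negbTE (lt0n_neq0 Hi1)).
    rewrite [nth 0 D 0]/=.
    case: (cnat x 0) => [|m]; first by rewrite mul0n add0n.
    rewrite mulSn; lia.
  have HT : forall x, x \in factorizations D e.-1 -> T x <= e.-1.
    move=> x Hxin; have [_ H2] := Hx x Hxin; rewrite -H2.
    apply: leq_sum_nat => i /andP [Hi1 Hi]; rewrite leq_pmulr // subn_gt0 Hgt //.
    by rewrite Hi andbT.
  have Hys : forall x, x \in factorizations D e.-1 ->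
      \sum_(0 <= i < k) yv x i * w i = n0 /\ \sum_(0 <= i < k) yv x i = L0.
    move=> x Hxin; have [H1 H2] := Hx x Hxin; have H3 := HT x Hxin.
    have Hl : \sum_(0 <= i < k) yv x i = L0.
      rewrite big_ltn // (eq_big_nat _ _ (F2 := fun i => cnat x i)); last first.
        by move=> i /andP [Hi1 Hi]; rewrite /yv (negbTE (lt0n_neq0 Hi1)).
      rewrite /yv eqxx -/(T x); lia.
    split => //; rewrite Hdec Hl big_ltn //.
    rewrite (eq_big_nat _ _ (F2 := fun i => cnat x i * (w i - e))); last first.
      by move=> i /andP [Hi1 Hi]; rewrite /yv (negbTE (lt0n_neq0 Hi1)).
    rewrite H2 /w /= subnn muln0 add0n; lia.
  have Hyc : forall x, x \in factorizations D e.-1 -> forall i, i < k -> cnat (g x) i = yv x i.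
    move=> x Hxin i Hi; have [H1 H2] := Hys x Hxin.
    by rewrite cnat_mkf // (cn_bound Hp H1 Hi).
  have Hgin : forall x, x \in factorizations D e.-1 -> g x \in MS.
    move=> x Hxin; have [H1 H2] := Hys x Hxin.
    rewrite inE in_fact flenE; apply/andP; split; apply/eqP.
      by apply: etrans H1; apply: eq_big_nat => i /andP [_ Hi]; rewrite Hyc.
    by apply: etrans H2; apply: eq_big_nat => i /andP [_ Hi]; rewrite Hyc.
  have Hinj : {in factorizations D e.-1 &, injective g}.
    move=> x1 x2 H1 H2 Hg; apply: ffun_eq_cnat => i; rewrite Hsz => Hi.
    case: (posnP i) => [->|Hi0].
      by rewrite (Hx x1 H1).1 (Hx x2 H2).1.
    have := Hyc x1 H1 i Hi; rewrite Hg Hyc // /yv (negbTE (lt0n_neq0 Hi0)) => //.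
  rewrite -(card_in_imset Hinj); apply: subset_leq_card; apply/subsetP => y /imsetP [c Hc ->].
  exact: Hgin.
split; last exact: Hup.
by exists n0 => //; apply/eqP; rewrite eqn_leq Hup // Hlow.
Qed.
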